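(* Consider the iterates $\{x_k,y_k,z_k\}$ of the AdaSMSAG method described in the context, and let $x^*$ be an optimal solution of $\min_{x\in X}\psi(x)$. For $k\ge 0$ let $D_k^2:=\frac{\|x^*-z_k\|^2}{2}$. If, for a given $k\ge 1$, $\alpha_k\beta_k-\theta_k\le 0$, then $$\langle G_k,\;y_k-\alpha_k x^*-(1-\alpha_k)y_{k-1}\rangle\le -\frac{\beta_k}{2}\|y_k-x_k\|^2+\alpha_k\theta_k\left(D_{k-1}^2-D_k^2\right).$$
   Context: Setting: $X\subseteq\mathbb{R}^n$ is a nonempty closed convex set; $\psi=f+h$ where $f(x)=E[F(x,\xi)]$, $h(x)=E[H(x,\xi)]$, $\xi$ a random vector supported on $\Xi\subseteq\mathbb{R}^d$, $F(\cdot,\xi)$ convex with Lipschitz continuous gradient and $H(\cdot,\xi)$ convex (possibly nonsmooth) for every $\xi$. $\{\tilde h_\mu\}_{\mu\in(0,\bar\mu]}$ is a smoothing function of $h$ on $X$ (each $\tilde h_\mu$ continuously differentiable and convex on $X$, $|\tilde h_{\mu_2}(x)-\tilde h_{\mu_1}(x)|\le\kappa|\mu_1-\mu_2|$, $\nabla\tilde h_\mu$ is $L/\mu$-Lipschitz on $X$, and $\tilde h_\mu(z)\to h(x)$ as $z\to x,\mu\downarrow0$), and $\tilde\psi_\mu:=f+\tilde h_\mu$. A stochastic first-order oracle returns, for input $x\in X$, $\mu>0$ and a sample $\xi$, a vector $\nabla\tilde\Psi_\mu(x,\xi)$. AdaSMSAG method: inputs are $N\ge1$, batch sizes $m_k\ge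 1$, $\alpha_k\in(0,1)$, $c>0$, $\mu_0>0$, $\beta_k>0$, $\theta_k>0$, and $z_0=y_0\in X$. For $k=1,\dots,N$: $x_k=\alpha_k z_{k-1}+(1-\alpha_k)y_{k-1}$; $\mu_k=\frac{c\mu_0}{k+c}$; draw samples $\xi_{k,1},\dots,\xi_{k,m_k}$ and set $G_k:=\frac1{m_k}\sum_{i=1}^{m_k}\nabla\tilde\Psi_{\mu_k}(x_k,\xi_{k,i})$; $y_k=\arg\min_{y\in X}\{\langle G_k,y-x_k\rangle+\frac{\beta_k}{2}\|y-x_k\|^2\}$; $z_k=\arg\min_{x\in X}\{\langle G_k,x-x_k\rangle+\frac{\theta_k}{2}\|x-z_{k-1}\|^2\}$. Output $y_N$. *)

(* Defs.v *)
From HB Require Import structures.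
From mathcomp Require Import all_boot all_order all_algebra.
From mathcomp Require Import all_classical all_reals all_analysis.
Set Implicit Arguments. Unset Strict Implicit. Unset Printing Implicit Defensive.
Import Order.TTheory GRing.Theory Num.Theory.
Import numFieldNormedType.Exports.
Local Open Scope ring_scope.
Local Open Scope classical_set_scope.

Definition dotv (R : realType) (n : nat) (u v : 'rV[R]_n) : R :=
  \sum_(i < n) u ord0 i * v ord0 i.

Definition sqnorm (R : realType) (n : nat) (u : 'rV[R]_n) : R := dotv u u.

Definition convex_on (R : realType) (n : nat) (X : set 'rV[R]_n)
  (g : 'rV[R]_n -> R) : Prop :=
  forall x y (t : R), X x -> X y -> 0 <= t <= 1 ->
    g (t *: x + (1 - t) *: y) <= t * g x + (1 - t) * g y.

Definition is_argmin (R : realType) (n : nat) (X : set 'rV[R]_n)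
  (phi : 'rV[R]_n -> R) (u : 'rV[R]_n) : Prop :=
  X u /\ forall v, X v -> phi u <= phi v.

Definition batch_grad (R : realType) (n : nat) (Xi : Type)
  (oracle : 'rV[R]_n -> R -> Xi -> 'rV[R]_n) (xk : 'rV[R]_n) (muk : R)
  (mk : nat) (samples : nat -> Xi) : 'rV[R]_n :=
  (mk%:R)^-1 *: \sum_(i < mk) oracle xk muk (samples i).

(* Main.v *)
Require Import Defs.
From HB Require Import structures.
From mathcomp Require Import all_boot all_order all_algebra.
From mathcomp Require Import all_classical all_reals all_analysis.
From mathcomp Require Import ring lra.
Import Order.TTheory GRing.Theory Num.Theory.
Import numFieldNormedType.Exports.
Local Open Scope ring_scope.
Local Open Scope classical_set_scope.
Set Implicit Arguments. Unset Strict Implicit.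

Lemma convX (R : realType) (n : nat) (X : set 'rV[R]_n) a b (t : R) :
  convex_set X -> X a -> X b -> 0 <= t -> t <= 1 -> X (t *: a + (1 - t) *: b).
Proof.
move=> cX Xa Xb t0 t1.
have := cX a b (Itv01 t0 t1).
rewrite !inE => /(_ Xa Xb). done.
Qed.

Section Dot.
Variables (R : realType) (n : nat).
Implicit Types (u v w : 'rV[R]_n).
Lemma dotvC u v : dotv u v = dotv v u.
Proof. by apply: eq_bigr => i _; rewrite mulrC. Qed.
Lemma dotvDl u v w : dotv (u + v) w = dotv u w + dotv v w.
Proof. by rewrite /dotv -big_split; apply: eq_bigr => i _; rewrite !mxE mulrDl. Qed.
Lemma dotvZl a u w : dotv (a *: u) w = a * dotv u w.
Proof. by rewrite /dotv mulr_sumr; apply: eq_bigr => i _; rewrite !mxE mulrA. Qed.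
Lemma dotvNl u w : dotv (- u) w = - dotv u w.
Proof. by rewrite -scaleN1r dotvZl mulN1r. Qed.
Lemma dotvBl u v w : dotv (u - v) w = dotv u w - dotv v w.
Proof. by rewrite dotvDl dotvNl. Qed.
Lemma dotvDr u v w : dotv w (u + v) = dotv w u + dotv w v.
Proof. by rewrite dotvC dotvDl !(dotvC w). Qed.
Lemma dotvZr a u w : dotv w (a *: u) = a * dotv w u.
Proof. by rewrite dotvC dotvZl dotvC. Qed.
Lemma dotvNr u w : dotv w (- u) = - dotv w u.
Proof. by rewrite dotvC dotvNl dotvC. Qed.
Lemma dotvBr u v w : dotv w (u - v) = dotv w u - dotv w v.
Proof. by rewrite dotvDr dotvNr. Qed.
Lemma sqnorm_ge0 u : 0 <= sqnorm u.
Proof. by apply: sumr_ge0 => i _; rewrite -expr2 sqr_ge0. Qed.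
End Dot.

Lemma lim_lemma (R : realType) (A B : R) :
  (forall t, 0 < t -> t <= 1 -> 0 <= t * A + t ^+ 2 * B) -> 0 <= B -> 0 <= A.
Proof.
move=> H B0; rewrite leNgt; apply/negP => A0.
have d0 : 0 < - A + 2 * B by lra.
have t0 : 0 < - A / (- A + 2 * B) by apply: divr_gt0; lra.
have t1 : - A / (- A + 2 * B) <= 1 by rewrite ler_pdivrMr //; lra.
have := H _ t0 t1.
set t := - A / (- A + 2 * B).
have ht : t * (- A + 2 * B) = - A by rewrite /t mulfVK //; lra.
move=> h.
have : 0 <= A + t * B.
  have : 0 <= t * (A + t * B) by rewrite mulrDr mulrA -expr2.
  by rewrite pmulr_rge0.
nra.
Qed.

Lemma convid (R : realType) (n : nat) (t : R) (u zc v : 'rV[R]_n) :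
  t *: u + (1 - t) *: zc - v = (zc - v) + t *: (u - zc).
Proof.
apply/rowP => i; rewrite !mxE; ring.
Qed.

Ltac dexp := rewrite /sqnorm ?(dotvDl, dotvNl, dotvZl, dotvDr, dotvNr, dotvZr).

Lemma three_point (R : realType) (n : nat) (X : set 'rV[R]_n) (G x0 zc zp u : 'rV[R]_n) (th : R) :
  convex_set X -> 0 < th ->
  is_argmin X (fun v => dotv G (v - x0) + th / 2 * sqnorm (v - zp)) zc -> X u ->
  0 <= dotv G (u - zc) + th * dotv (zc - zp) (u - zc).
Proof.
move=> cX th0 [Xz opt] Xu.
apply: (@lim_lemma _ _ (th / 2 * sqnorm (u - zc))); last first.
  by apply: mulr_ge0; [lra| exact: sqnorm_ge0].
move=> t t0 t1.
have := opt _ (convX cX Xu Xz (ltW t0) t1).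
rewrite !convid.
move: (zc - x0) (zc - zp) (u - zc) => a b d.
dexp.
have := dotvC b d.
nra.
Qed.

Theorem lemma4 (R : realType) (n : nat) (Xi : Type)
  (X : set 'rV[R]_n) (f h : 'rV[R]_n -> R)
  (oracle : 'rV[R]_n -> R -> Xi -> 'rV[R]_n)
  (N : nat) (m : nat -> nat) (alpha beta theta : nat -> R) (c mu0 : R)
  (samples : nat -> nat -> Xi)
  (x y z : nat -> 'rV[R]_n) (xstar : 'rV[R]_n) (k : nat) :
  X !=set0 -> closed X -> convex_set X ->
  convex_on X f -> convex_on X h ->
  (1 <= N)%N ->
  (forall j, (1 <= j <= N)%N -> (1 <= m j)%N) ->
  (forall j, (1 <= j <= N)%N -> 0 < alpha j < 1) ->
  0 < c -> 0 < mu0 ->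
  (forall j, (1 <= j <= N)%N -> 0 < beta j) ->
  (forall j, (1 <= j <= N)%N -> 0 < theta j) ->
  X (z 0%N) -> y 0%N = z 0%N ->
  (forall j, (1 <= j <= N)%N ->
     let mu_j := c * mu0 / (j%:R + c) in
     let G_j := batch_grad oracle (x j) mu_j (m j) (samples j) in
     [/\ x j = alpha j *: z j.-1 + (1 - alpha j) *: y j.-1,
         is_argmin X (fun u => dotv G_j (u - x j) + beta j / 2 * sqnorm (u - x j)) (y j)
       & is_argmin X (fun u => dotv G_j (u - x j) + theta j / 2 * sqnorm (u - z j.-1)) (z j)]) ->
  is_argmin X (fun u => f u + h u) xstar ->
  (1 <= k <= N)%N ->
  alpha k * beta k - theta k <= 0 ->
  let mu_k := c * mu0 / (k%:R + c) in
  let G_k := batch_grad oracle (x k) mu_k (m k) (samples k) in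
  let D2 := fun j => sqnorm (xstar - z j) / 2 in
  dotv G_k (y k - alpha k *: xstar - (1 - alpha k) *: y k.-1)
    <= - (beta k / 2) * sqnorm (y k - x k) + alpha k * theta k * (D2 k.-1 - D2 k).
Proof.
move=> _ _ cX _ _ _ _ Halpha _ _ Hbeta Htheta Xz0 y0z0 Hstep [Xs _] Hk Hab.
cbv zeta.
set G_k := batch_grad _ _ _ _ _.
have [xk_eq [Xyk yopt] zopt] := Hstep k Hk.
rewrite -/G_k in yopt zopt.
have Xyp : X (y k.-1).
  case: k Hk {Hab G_k xk_eq yopt zopt Xyk} => [//|[|k]] Hk.
    by rewrite /= y0z0.
  have Hk' : (1 <= k.+1 <= N)%N by move: Hk => /andP[_ H]; apply/andP; split => //; apply: ltnW.
  by have [_ [Xy _] _] := Hstep _ Hk'.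
have [a0 a1] := andP (Halpha k Hk).
have b0 := Hbeta k Hk.
have th0 := Htheta k Hk.
have [Xzk _] := zopt.
have Hy := yopt _ (convX cX Xzk Xyp (ltW a0) (ltW a1)).
have Hz := three_point cX th0 zopt Xs.
have H2 : 0 <= alpha k * (dotv G_k (xstar - z k) + theta k * dotv (z k - z k.-1) (xstar - z k)).
  by apply: mulr_ge0 => //; apply: ltW.
have H3 : 0 <= alpha k * (theta k - alpha k * beta k) * sqnorm (z k - z k.-1).
  by apply: mulr_ge0; [apply: mulr_ge0; lra | exact: sqnorm_ge0].
move: Hy H2 H3; rewrite xk_eq.
clear -Hab.
move: G_k (y k) (y k.-1) (z k) (z k.-1) xstar (alpha k) (beta k) (theta k) Hab => G yk yp zk zp xs al be th Hab.
dexp.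
rewrite ?(dotvC zp yk) ?(dotvC yp yk) ?(dotvC yp zp) ?(dotvC yp zk) ?(dotvC zp zk) ?(dotvC zp xs) ?(dotvC zk xs).
move=> Hy H2 H3.
nra.
Qed.
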